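(* Let $k=k(n)$ be integers with $3\le k(n)\le n-3$ for all sufficiently large $n$, and suppose $\log k(n)/\log n\to 0$ as $n\to\infty$. Then for all sufficiently large $n$, \[ \mathsf{BO}(k(n),\mathbb{Z}/n\mathbb{Z})\ge n\exp\!\left(-5\sqrt{\log k(n)\,\log n}\right). \]
   Context: For a positive integer $k$, a set $\{g_1,\dots,g_k\}$ of $k$ distinct elements of a finite abelian group $G$ (written additively) is called $k$-barycentric if $\sum_{i=1}^k g_i = k\,g_j$ for some $1\le j\le k$. The $k$-th barycentric Olson constant $\mathsf{BO}(k,G)$ is the smallest integer $\ell$ such that every subset $A\subseteq G$ with $|A|\ge \ell$ contains a $k$-barycentric subset (so that always $\mathsf{BO}(k,G)\le |G|+1$). $\log$ denotes the natural logarithm. *)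

(* Defs.v *)
From Stdlib Require Import Reals.
From HB Require Import structures.
From mathcomp Require Import all_boot all_order all_algebra.

Set Implicit Arguments.
Unset Strict Implicit.
Unset Printing Implicit Defensive.

Local Open Scope nat_scope.

Section Bary.
Variable G : finZmodType.

Definition barycentric (k : nat) (B : {set G}) : bool :=
  (#|B| == k) && [exists j in B, (\sum_(g in B) g)%R == (j *+ k)%R].

Definition has_barycentric (k : nat) (A : {set G}) : bool :=
  [exists B : {set G}, (B \subset A) && barycentric k B].

Definition BO_good (k l : nat) : bool :=
  [forall A : {set G}, (l <= #|A|) ==> has_barycentric k A].

Lemma BO_good_ex (k : nat) : exists l, BO_good k l.
Proof.
exists #|G|.+1; apply/forallP => A; apply/implyP => H.
by move: (leq_trans H (max_card A)); rewrite ltnn.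
Qed.

Definition BO (k : nat) : nat := ex_minn (@BO_good_ex k).
End Bary.

(* Main.v *)
Require Import Defs.
From Stdlib Require Import Reals.
From Stdlib Require Import Lra Lia ZArith.
Module RealPart.
Local Open Scope R_scope.
Lemma ln_le' x y : 0 < x -> x <= y -> ln x <= ln y.
Proof. intros h1 h2. destruct (Rle_lt_or_eq_dec _ _ h2) as [h|h].
- left; apply ln_increasing; lra. - subst; lra. Qed.

Lemma exp_le' x y : x <= y -> exp x <= exp y.
Proof. intros h2. destruct (Rle_lt_or_eq_dec _ _ h2) as [h|h].
- left; apply exp_increasing; lra. - subst; lra. Qed.

Lemma nat_between t : 0 <= t -> exists j : nat, t - 1 < INR j <= t.
Proof.
intros ht. destruct (archimed t) as [h1 h2].
assert (hz : Z.le 0 (Z.sub (up t) 1)).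
{ assert (0 < IZR (up t)) by lra. apply lt_0_IZR in H. lia. }
exists (Z.to_nat (Z.sub (up t) 1)). rewrite INR_IZR_INZ, Z2Nat.id by exact hz.
rewrite minus_IZR. simpl. lra.
Qed.

Lemma le_div a b c : 0 < c -> a * c <= b -> a <= b / c.
Proof. intros. replace a with ((a*c)/c) by (field; lra). unfold Rdiv.
apply Rmult_le_compat_r; [left; apply Rinv_0_lt_compat; lra | lra]. Qed.

Lemma div_le a b c : 0 < c -> a <= b * c -> a / c <= b.
Proof. intros. replace b with ((b*c)/c) by (field; lra). unfold Rdiv.
apply Rmult_le_compat_r; [left; apply Rinv_0_lt_compat; lra | lra]. Qed.

Lemma exp_minus_ln u c : 0 < c -> exp (u - ln c) = exp u / c.
Proof. intros h. unfold Rminus. rewrite exp_plus, exp_Ropp, exp_ln by exact h. reflexivity. Qed.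

Lemma pow_exp a j : 0 < a -> a ^ j = exp (INR j * ln a).
Proof. intros h. rewrite <- Rpower_pow by exact h. reflexivity. Qed.

Lemma ln_bound y : 8 <= y -> ln (y + 1) <= y / 2.
Proof.
intros hy. rewrite <- (ln_exp (y/2)). apply ln_le'; [lra|].
replace (y/2) with (y/4 + y/4) by field. rewrite exp_plus.
assert (h := exp_ineq1_le (y/4)). nra.
Qed.

Lemma real_core (n k : nat) : (3 <= k)%nat -> 100 <= ln (INR n) ->
  ln (INR k) <= ln (INR n) / 16 ->
  exists m D : nat, (0 < m)%nat /\ (2 <= D)%nat /\ (INR k * INR m) ^ D <= INR n /\
   INR n * exp (- 5 * sqrt (ln (INR k) * ln (INR n))) <= INR m ^ (D - 2) / INR D.
Proof.
intros hk hL hKL.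
set (L := ln (INR n)) in *. set (K := ln (INR k)) in *.
assert (kpos : 3 <= INR k) by (replace 3 with (INR 3) by (simpl; lra); apply le_INR; lia).
assert (npos : 0 < INR n).
{ destruct n. - unfold L in hL. simpl in hL. unfold ln in hL. destruct (Rlt_dec 0 0); lra.
  - apply lt_0_INR; lia. }
assert (hK1 : 1 <= K).
{ unfold K. rewrite <- (ln_exp 1). apply ln_le'. apply exp_pos.
  assert (h := exp_le_3). lra. }
assert (hln2 : ln 2 <= K). { unfold K. apply ln_le'; lra. }
assert (hln2p : 0 < ln 2). { assert (h := ln_lt_2). lra. }
set (x := sqrt (K * L)).
assert (hx0 : 0 <= x) by apply sqrt_pos.
assert (hxx : x * x = K * L) by (apply sqrt_sqrt; nra).
assert (hxL : x <= L / 4) by nra.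
assert (hKx : K <= x / 4) by nra.
set (s := x / K).
assert (hsK : s * K = x) by (unfold s; field; lra).
assert (hs4 : 4 <= s) by (unfold s; apply le_div; lra).
assert (hxs : x * s = L).
{ unfold s. apply Rmult_eq_reg_r with K; [|lra]. unfold Rdiv. rewrite Rmult_assoc, Rmult_assoc, Rinv_l by lra. nra. }
destruct (nat_between (s + 1)) as [D [hD1 hD2]]; [lra|].
assert (hDpos : 0 < INR D) by lra.
assert (hD2n : (2 <= D)%nat).
{ apply INR_le. simpl. lra. }
set (E := exp (L / INR D)).
assert (hEpos : 0 < E) by apply exp_pos.
assert (hLD : 2 * K * INR D <= L) by nra.
assert (hLD' : 2 * K <= L / INR D).
{ apply le_div; lra. }
assert (hln2k : ln (2 * INR k) = ln 2 + K) by (unfold K; apply ln_mult; lra).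
assert (hE2k : 2 * INR k <= E).
{ unfold E. rewrite <- (exp_ln (2 * INR k)) by lra. apply exp_le'. lra. }
destruct (nat_between (E / INR k)) as [m [hm1 hm2]].
{ apply Rlt_le, Rdiv_lt_0_compat; lra. }
set (a := E / (2 * INR k)).
assert (ha1 : 1 <= a).
{ unfold a. apply le_div; lra. }
assert (ham : a <= INR m).
{ assert (E / INR k - 1 >= a).
  { unfold a. unfold Rdiv. replace (/ (2 * INR k)) with (/2 * / INR k) by (field; lra).
    assert (E * / INR k >= 2). { apply Rle_ge, le_div; lra. } nra. }
  lra. }
exists m, D. split; [|split; [exact hD2n|split]].
- apply INR_lt. simpl. lra.
- assert (h : (INR k * INR m) ^ D <= E ^ D).
  { apply pow_incr. split. { apply Rmult_le_pos; lra. }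
    apply Rmult_le_reg_r with (/ INR k). { apply Rinv_0_lt_compat; lra. }
    rewrite Rmult_comm, <- Rmult_assoc, Rinv_l by lra. unfold Rdiv in hm2. lra. }
  rewrite (pow_exp E D) in h by lra. unfold E in h. rewrite ln_exp in h.
  replace (INR D * (L / INR D)) with L in h by (field; lra).
  unfold L in h. rewrite exp_ln in h by lra. exact h.
-
  assert (hmD : a ^ (D - 2) <= INR m ^ (D - 2)).
  { apply pow_incr. lra. }
  apply Rle_trans with (a ^ (D - 2) / INR D).
  2:{ unfold Rdiv. apply Rmult_le_compat_r. { left; apply Rinv_0_lt_compat; lra. } exact hmD. }
  rewrite pow_exp by lra.
  rewrite minus_INR by exact hD2n.
  assert (hla : ln a = L / INR D - (ln 2 + K)).
  { unfold a. unfold Rdiv. rewrite ln_mult, ln_Rinv; try lra.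
    - unfold E. rewrite ln_exp, hln2k. lra.
    - apply Rinv_0_lt_compat; lra. }
  rewrite hla.
  rewrite <- (exp_minus_ln _ (INR D)) by lra.
  rewrite <- (exp_ln (INR n)) by lra. fold L. rewrite <- exp_plus.
  apply exp_le'. fold x.
  assert (hlnD : ln (INR D) <= x / 2).
  { set (y := sqrt L).
    assert (hy0 : 0 <= y) by apply sqrt_pos.
    assert (hyy : y * y = L) by (apply sqrt_sqrt; lra).
    assert (hy8 : 8 <= y) by nra.
    assert (hsy : s <= y).
    { assert (s * s <= L) by nra. nra. }
    assert (hyx : y <= x) by nra.
    apply Rle_trans with (ln (y + 1)).
    - apply ln_le'; lra.
    - assert (h := ln_bound y hy8). lra. }
  assert (h2LD : 2 * L / INR D <= 2 * x).
  { apply div_le; nra. }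
  assert (hexp : (INR D - 2) * (L / INR D - (ln 2 + K)) >= L - 2 * L / INR D - INR D * (2 * K)).
  { replace ((INR D - 2) * (L / INR D - (ln 2 + K))) with
       (L - 2 * L / INR D - INR D * (ln 2 + K) + 2 * (ln 2 + K)) by (field; lra).
    nra. }
  assert (hDK : INR D * (2 * K) <= 2 * x + 2 * K) by nra.
  replace (INR 2) with 2 by (simpl; lra). lra.
Qed.

End RealPart.
Import RealPart.
From HB Require Import structures.
From mathcomp Require Import all_boot all_order all_algebra.
From mathcomp Require Import zify.
Set Implicit Arguments. Unset Strict Implicit. Unset Printing Implicit Defensive.

Module CombPart.
Import GRing.Theory.
Import GRing.Theory.

Lemma digits_lt (d : nat) D (a : 'I_D -> nat) : (forall i, a i < d) ->
  \sum_(i < D) a i * d ^ i < d ^ D.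
Proof.
elim: D a => [|D IH] a Ha; first by rewrite big_ord0 expn0.
rewrite big_ord_recl expn0 muln1.
have -> : \sum_(i < D) a (lift ord0 i) * d ^ (lift ord0 i)
        = d * \sum_(i < D) a (lift ord0 i) * d ^ i.
  rewrite big_distrr; apply: eq_bigr => i _; by rewrite lift0 expnS mulnCA.
have H1 := IH (fun i => a (lift ord0 i)) (fun i => Ha _).
have H2 := Ha ord0. rewrite expnS.
have H3 := leq_mul (leqnn d) H1. rewrite mulnS in H3. lia.
Qed.

Lemma digits_uniq (d : nat) D (a b : 'I_D -> nat) : (forall i, a i < d) ->
  (forall i, b i < d) ->
  \sum_(i < D) a i * d ^ i = \sum_(i < D) b i * d ^ i -> a =1 b.
Proof.
elim: D a b => [|D IH] a b Ha Hb; first by move=> _ [].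
rewrite !big_ord_recl !expn0 !muln1.
have E : forall c : 'I_D.+1 -> nat, \sum_(i < D) c (lift ord0 i) * d ^ (lift ord0 i)
        = d * \sum_(i < D) c (lift ord0 i) * d ^ i.
  move=> c; rewrite big_distrr; apply: eq_bigr => i _; by rewrite lift0 expnS mulnCA.
rewrite !E => Heq.
have d0 : 0 < d by have := Ha ord0; lia.
have H0 : a ord0 = b ord0.
  have := congr1 (modn^~ d) Heq.
  by rewrite ![_ + d * _]addnC ![d * _]mulnC !modnMDl !modn_small.
move: Heq; rewrite H0 => /addnI /eqP; rewrite eqn_pmul2l // => /eqP Heq.
have IH' := IH _ _ (fun i => Ha _) (fun i => Hb _) Heq.
move=> i; case: (unliftP ord0 i) => [j ->|->] //; exact: IH'.
Qed.

Lemma sq_ident (a b : nat) : a * a + b * b = 2 * (a * b) + ((a - b) * (a - b) + (b - a) * (b - a)).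
Proof.
case: (leqP a b) => h.
  have -> : a - b = 0 by lia.
  have [c ->] : exists c, b = a + c by exists (b - a); lia.
  have -> : a + c - a = c by lia. nia.
have -> : b - a = 0 by lia.
have [c ->] : exists c, a = b + c by exists (a - b); lia.
have -> : b + c - b = c by lia. nia.
Qed.

Section Constr.
Variables (n k m D : nat).
Hypotheses (n1 : 1 < n) (k2 : 1 < k) (m1 : 0 < m) (hdn : (k * m) ^ D <= n).

Definition fv (v : {ffun 'I_D -> 'I_m}) : nat := \sum_(i < D) v i * (k * m) ^ i.
Definition nrm (v : {ffun 'I_D -> 'I_m}) : nat := \sum_(i < D) v i * v i.
Definition ip (u v : {ffun 'I_D -> 'I_m}) : nat := \sum_(i < D) u i * v i.
Definition hv (v : {ffun 'I_D -> 'I_m}) : 'Z_n := ((fv v)%:R : 'Z_n)%R.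

Lemma fv_lt v : fv v < n.
Proof.
apply: leq_trans hdn; apply: digits_lt => i.
have := ltn_ord (v i); nia.
Qed.

Lemma cast_inj a b : a < n -> b < n -> ((a%:R : 'Z_n) = b%:R)%R -> a = b.
Proof.
move=> ha hb H; have Ha := val_Zp_nat n1 a; have Hb := val_Zp_nat n1 b.
rewrite !modn_small // in Ha Hb; rewrite -Ha -Hb; exact: (congr1 val H).
Qed.

Lemma hv_inj : injective hv.
Proof.
move=> u v Huv; have H := cast_inj (fv_lt u) (fv_lt v) Huv.
have Hu : forall i, (fun i => nat_of_ord (u i)) i < k * m.
  by move=> i; have := ltn_ord (u i); nia.
have Hv : forall i, (fun i => nat_of_ord (v i)) i < k * m.
  by move=> i; have := ltn_ord (v i); nia.
have E := digits_uniq Hu Hv H.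
apply/ffunP => i; apply: val_inj; exact: E.
Qed.

Lemma no_bary r : ~~ has_barycentric k (hv @: [set v | nrm v == r]).
Proof.
apply/negP => /existsP [B /andP [sBA /andP [/eqP cB /existsP [j /andP [jB /eqP Hs]]]]].
set V := hv @^-1: B.
have BV : B = hv @: V.
  apply/setP => g; apply/idP/idP.
    move=> gB; have := subsetP sBA g gB => /imsetP [w _ gw].
    by apply/imsetP; exists w => //; rewrite inE -gw.
  by move/imsetP => [w]; rewrite inE => wB ->.
have cV : #|V| = k.
  by rewrite -cB BV card_in_imset // => u v _ _; apply: hv_inj.
have VS : forall v, v \in V -> nrm v = r.
  move=> v; rewrite inE => /(subsetP sBA) /imsetP [w]; rewrite inE => /eqP <- /hv_inj ->.
  done.
have [vj vjV jE] : exists2 vj, vj \in V & j = hv vj by apply/imsetP; rewrite -BV.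
rewrite BV big_imset /= in Hs; last by move=> u v _ _; apply: hv_inj.
rewrite jE /hv in Hs.
have Hs2 : (((\sum_(v in V) fv v)%:R : 'Z_n) = (fv vj * k)%:R)%R.
  by rewrite natrM mulr_natr natr_sum.
have E1 : \sum_(v in V) fv v = \sum_(i < D) (\sum_(v in V) (v i : nat)) * (k * m) ^ i.
  rewrite /fv exchange_big; apply: eq_bigr => i _; by rewrite big_distrl.
have E2 : fv vj * k = \sum_(i < D) (vj i * k) * (k * m) ^ i.
  rewrite /fv big_distrl; apply: eq_bigr => i _ /=; by rewrite mulnAC.
have B1 : forall i : 'I_D, \sum_(v in V) (v i : nat) < k * m.
  move=> i; apply: (@leq_ltn_trans (\sum_(v in V) m.-1)).
    by apply: leq_sum => v _; have := ltn_ord (v i); lia.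
  rewrite sum_nat_const cV; nia.
have B2 : forall i : 'I_D, vj i * k < k * m.
  by move=> i; have := ltn_ord (vj i); nia.
have Hs' : \sum_(v in V) fv v < n -> fv vj * k < n -> \sum_(v in V) fv v = fv vj * k := fun ha hb => cast_inj ha hb Hs2.
rewrite E1 E2 in Hs'.
have Hdig := digits_uniq B1 B2 (Hs' (leq_trans (digits_lt B1) hdn) (leq_trans (digits_lt B2) hdn)).
have Sip : \sum_(v in V) ip v vj = k * r.
  rewrite /ip exchange_big /= -(VS vj vjV) /nrm big_distrr; apply: eq_bigr => i _ /=.
  by rewrite -big_distrl /= Hdig [_ * k]mulnC -mulnA.
have Hid : forall v, v \in V ->
   2 * ip v vj + \sum_(i < D) ((v i - vj i) * (v i - vj i) + (vj i - v i) * (vj i - v i)) = 2 * r.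
  move=> v vV; have -> : 2 * r = nrm v + nrm vj by rewrite (VS v vV) (VS vj vjV); lia.
  rewrite /nrm /ip -big_split /= big_distrr -big_split /=.
  by apply: eq_bigr => i _; rewrite (sq_ident (v i) (vj i)).
have Ssum : \sum_(v in V) (2 * ip v vj + \sum_(i < D) ((v i - vj i) * (v i - vj i) + (vj i - v i) * (vj i - v i))) = \sum_(v in V) 2 * r := eq_bigr _ Hid.
rewrite big_split /= -big_distrr /= Sip sum_nat_const cV in Ssum.
have Z : \sum_(v in V) \sum_(i < D) ((v i - vj i) * (v i - vj i) + (vj i - v i) * (vj i - v i)) = 0.
  move: Ssum; set X := \sum_(v in V) _; lia.
have sub : V \subset [set vj].
  apply/subsetP => v vV; rewrite inE.
  move/eqP: Z; rewrite sum_nat_eq0 => /forallP /(_ v); rewrite vV /= sum_nat_eq0.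
  move=> /forallP H; apply/eqP/ffunP => i; apply: val_inj => /=.
  have := H i; rewrite /= => /eqP; nia.
have := subset_leq_card sub; rewrite cards1 cV; lia.
Qed.

End Constr.

Lemma BO_gt (G : finZmodType) k (A : {set G}) : ~~ has_barycentric k A -> #|A| < BO G k.
Proof.
move=> nb; rewrite /BO; case: ex_minnP => l Hl _.
rewrite ltnNge; apply/negP => le; move/forallP: Hl => /(_ A); rewrite le /= => H.
by rewrite H in nb.
Qed.

Lemma nrm_lt D m (v : {ffun 'I_D -> 'I_m}) : 0 < D -> nrm v < D * m * m.
Proof.
move=> D0; rewrite /nrm.
apply: (@leq_ltn_trans (\sum_(i < D) m.-1 * m.-1)).
  apply: leq_sum => i _; have := ltn_ord (v i) => h; apply: leq_mul; lia.
rewrite sum_nat_const card_ord.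
have m0 : 0 < m by case: m v => [|//] v; case: (v (Ordinal D0)).
nia.
Qed.

Lemma pigeon D m : 0 < D -> 0 < m ->
  exists r, m ^ D <= #|[set v : {ffun 'I_D -> 'I_m} | nrm v == r]| * (D * m * m).
Proof.
move=> D0 m0; set N := D * m * m.
have N0 : 0 < N by rewrite /N !muln_gt0 D0 m0.
pose p (v : {ffun 'I_D -> 'I_m}) : 'I_N := Ordinal (nrm_lt v D0).
have Hsum : \sum_(r < N) #|[set v : {ffun 'I_D -> 'I_m} | nrm v == r]| = m ^ D.
  have <- : #|{ffun 'I_D -> 'I_m}| = m ^ D by rewrite card_ffun !card_ord.
  rewrite -sum1_card (partition_big p predT) //=.
  apply: eq_bigr => r _; rewrite -sum1_card; apply: eq_bigl => v.
  by rewrite inE.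
case: (pickP (fun r : 'I_N => m ^ D <= #|[set v : {ffun 'I_D -> 'I_m} | nrm v == r]| * N)).
  by move=> r H; exists (nat_of_ord r).
move=> H; exfalso.
have L : \sum_(r < N) #|[set v : {ffun 'I_D -> 'I_m} | nrm v == r]| * N <= \sum_(r < N) (m ^ D).-1.
  apply: leq_sum => r _; have := H r; rewrite /= => /negbT; rewrite -ltnNge; lia.
rewrite -big_distrl /= Hsum sum_nat_const card_ord in L.
have : 0 < m ^ D by rewrite expn_gt0 m0.
nia.
Qed.

Theorem comb_bound n k m D : 1 < n -> 1 < k -> 0 < m -> 0 < D -> (k * m) ^ D <= n ->
  m ^ D <= BO [the finZmodType of 'Z_n] k * (D * m * m).
Proof.
move=> n1 k2 m0 D0 hdn.
have [r Hr] := pigeon D0 m0.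
apply: (leq_trans Hr); apply: leq_mul => //.
have := BO_gt (no_bary n1 k2 m0 hdn r).
rewrite card_in_imset; first by apply: ltnW.
by move=> u v _ _; apply: hv_inj.
Qed.

End CombPart.
Import CombPart.

Open Scope R_scope.

Lemma INR_expn m D : INR (expn m D) = INR m ^ D.
Proof.
elim: D => [|D IH]; first by rewrite expn0.
rewrite expnS -multE mult_INR IH. reflexivity.
Qed.

Lemma big_ln n : (expn 3 100 <= n)%N -> 100 <= ln (INR n).
Proof.
move=> /leP h. apply le_INR in h. rewrite INR_expn in h.
have h3 : 1 <= ln (INR 3).
  rewrite -(ln_exp 1). apply ln_le'. apply exp_pos.
  have := exp_le_3. simpl. lra.
have hp : 0 < INR 3 ^ 100 by apply pow_lt; simpl; lra.
apply ln_le' in h; last exact hp.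
rewrite ln_pow in h; last by simpl; lra.
have e : INR 100 = 100 by simpl; lra.
rewrite e in h. lra.
Qed.

Theorem mainTheorem11 (k : nat -> nat) :
  (exists N : nat, forall n : nat, (N <= n)%N -> (3 <= k n)%N /\ (k n <= n - 3)%N) ->
  Un_cv (fun n : nat => ln (INR (k n)) / ln (INR n)) 0 ->
  exists N : nat, forall n : nat, (N <= n)%N ->
    INR n * exp (- 5 * sqrt (ln (INR (k n)) * ln (INR n))) <=
    INR (BO [the finZmodType of 'Z_n] (k n)).
Proof.
move=> [N1 HN1] Hcv.
have [N2 HN2] : exists N2, forall n, (n >= N2)%coq_nat -> R_dist (ln (INR (k n)) / ln (INR n)) 0 < 1/16.
  by apply: Hcv; lra.
exists (N1 + N2 + expn 3 100)%N => n Hn.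
have h1 : (N1 <= n)%N by apply: leq_trans _ Hn; rewrite -addnA leq_addr.
have h2 : (N2 <= n)%N by apply: leq_trans _ Hn; rewrite -addnA addnC -addnA leq_addr.
have h3 : (expn 3 100 <= n)%N by apply: leq_trans _ Hn; rewrite leq_addl.
have [hk3 _] := HN1 n h1.
have hL := big_ln h3.
have hKL : ln (INR (k n)) <= ln (INR n) / 16.
  have := HN2 n (elimT leP h2). rewrite /R_dist Rminus_0_r => /Rabs_def2 [ha _].
  have hLp : 0 < ln (INR n) by lra.
  have -> : ln (INR (k n)) = ln (INR (k n)) / ln (INR n) * ln (INR n) by field; lra.
  nra.
have [m [D [hm [hD [hkm hineq]]]]] := real_core n (k n) (elimT leP hk3) hL hKL.
apply: (Rle_trans _ _ _ hineq).
have hkmn : (expn (k n * m) D <= n)%N.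
  apply/leP; apply INR_le. rewrite INR_expn -multE mult_INR. exact hkm.
have n1 : (1 < n)%N.
  apply: leq_trans _ hkmn.
  have km1 : (1 < k n * m)%N.
    have : (0 < m)%N by apply/ltP.
    move=> hm'; apply: (@leq_trans (k n)); first exact: leq_trans _ hk3.
    by rewrite leq_pmulr.
  apply: (leq_trans km1).
  rewrite -{1}(expn1 (k n * m)); apply: leq_pexp2l; first exact: ltnW.
  apply: (@leq_trans 2) => //; exact/leP.
have hb := comb_bound n1 (leq_trans (isT : (1 < 3)%N) hk3) (introT ltP hm) (leq_trans (isT : (0 < 2)%N) (introT leP hD)) hkmn.
move/leP: hb => hb. apply le_INR in hb.
rewrite INR_expn -!multE !mult_INR in hb.
have hmp : 0 < INR m by apply lt_0_INR.
have hDp : 0 < INR D by apply lt_0_INR; lia.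
have hpow : INR m ^ D = INR m ^ (D - 2) * (INR m * INR m).
  have {1}-> : D = ((D - 2) + 2)%coq_nat by lia.
  rewrite pow_add. simpl. ring.
rewrite hpow in hb.
apply div_le; first exact hDp.
apply Rmult_le_reg_r with (INR m * INR m); first nra.
apply: (Rle_trans _ _ _ hb). right; ring.
Qed.
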